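(* Let $(\bar x,\bar y)\in\mathbb{R}^2$, $n\ge 3$, and $a_k,b_k\in\mathbb{R}$ with $a_k^2+b_k^2\ne0$ for $k=1,\dots,n$, defining lines $l^k:=\{(x,y): a_k(x-\bar x)+b_k(y-\bar y)-1=0\}$ (none passes through $(\bar x,\bar y)$). Assume $$a_ib_{i^\oplus}-b_ia_{i^\oplus}>0\quad\text{for all } i\in\{1,\dots,n\},$$ and $$-a_k(b_i-b_j)+b_k(a_i-a_j)-(a_ib_j-b_ia_j)<0\quad\text{for all } i\in\{1,\dots,n\},\ j=i^{\oplus},\ k\in\{1,\dots,n\}\setminus\{i,j\}.$$ Let $S:=\{(x,y): a_k(x-\bar x)+b_k(y-\bar y)-1\le0\text{ for all }k\}$. Then the boundary of $S$ is an enclosed, non-degenerate, $n$-sided convex polygon containing $(\bar x,\bar y)$ in its interior, namely the closed polygon formed by the sequence $(V_{12},V_{23},\dots,V_{(n-1)n},V_{n1},V_{12})$ with $V_{ii^\oplus}:=l^i\cap l^{i^\oplus}$, whose $n$ vertices are pairwise distinct with no three cyclically consecutive ones collinear.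
   Context: For $i\in\{1,\dots,n\}$, $i^{\oplus}:=i+1$ if $i\le n-1$ and $n^{\oplus}:=1$. *)

(* Defs.v *)
From HB Require Import structures.
From mathcomp Require Import all_boot all_order all_algebra.
From mathcomp Require Import all_classical all_reals all_analysis.
Set Implicit Arguments. Unset Strict Implicit. Unset Printing Implicit Defensive.
Import Order.TTheory GRing.Theory Num.Theory.
Import numFieldNormedType.Exports.
Local Open Scope classical_set_scope.
Local Open Scope ring_scope.

(* cyclic successor i^⊕ on indices {0,..,n-1} (0-based version of {1,..,n}) *)
Definition succ n (i : 'I_n) : 'I_n := ordS i.

Definition line (R : realType) (xb yb ak bk : R) : set (R * R) :=
  [set p | ak * (p.1 - xb) + bk * (p.2 - yb) - 1 = 0].

Definition Sreg (R : realType) n (xb yb : R) (a b : 'I_n -> R) : set (R * R) :=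
  [set p | forall k, a k * (p.1 - xb) + b k * (p.2 - yb) - 1 <= 0].

Definition boundary (T : topologicalType) (A : set T) : set T :=
  closure A `\` interior A.

Definition segment (R : realType) (p q : R * R) : set (R * R) :=
  [set r | exists2 t : R, 0 <= t <= 1 &
     r = ((1 - t) * p.1 + t * q.1, (1 - t) * p.2 + t * q.2)].

Definition collinear (R : realType) (p q r : R * R) : Prop :=
  (q.1 - p.1) * (r.2 - p.2) - (q.2 - p.2) * (r.1 - p.1) = 0.

Definition convex_plane (R : realType) (A : set (R * R)) : Prop :=
  forall p q, A p -> A q -> segment p q `<=` A.

Definition bounded_plane (R : realType) (A : set (R * R)) : Prop :=
  exists M : R, forall p, A p -> `|p.1| <= M /\ `|p.2| <= M.

(* Main.v *)
Require Import Defs.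
From HB Require Import structures.
From mathcomp Require Import all_boot all_order all_algebra.
From mathcomp Require Import all_classical all_reals all_analysis.
From mathcomp Require Import ring lra zify.
Import Order.TTheory GRing.Theory Num.Theory.
Import numFieldNormedType.Exports.
Local Open Scope classical_set_scope.
Local Open Scope ring_scope.

Lemma succ_val n (i : 'I_n) : val (succ i) = if (i.+1 < n)%N then i.+1 else 0%N.
Proof.
rewrite /succ /= /ordS /=.
case: ltnP => h; first by rewrite modn_small.
have -> : i.+1 = n by have := ltn_ord i; lia.
by rewrite modnn.
Qed.

Lemma succ_neq n (i : 'I_n) : (2 <= n)%N -> succ i != i.
Proof.
move=> h; apply/eqP => /(congr1 (@nat_of_ord _)); rewrite succ_val.
have := ltn_ord i; case: (ltnP i.+1 n) => /=; lia.
Qed.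

Lemma succ2_neq n (i : 'I_n) : (3 <= n)%N -> succ (succ i) != i.
Proof.
move=> h; apply/eqP => /(congr1 (@nat_of_ord _)); rewrite !succ_val.

have := ltn_ord i; case: (boolP (i.+1 < n)%N) => h1; rewrite ?h1 ?(negbTE h1) /=; case: ifP => ?; lia.
Qed.

Lemma abs_lin {R : realType} (a b x y r : R) : `|x| < r -> `|y| < r ->
  `|a * x + b * y| <= (`|a| + `|b|) * r.
Proof.
move=> hx hy; apply: le_trans (ler_normD _ _) _.
rewrite !normrM mulrDl; apply: lerD; apply: ler_wpM2l => //; exact: ltW.
Qed.

Lemma abs_lin2 {R : realType} (a b x y r : R) : `|x| <= r -> `|y| <= r ->
  `|a * x - b * y| <= (`|a| + `|b|) * r.
Proof.
move=> hx hy; apply: le_trans (ler_normB _ _) _.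
rewrite !normrM mulrDl; apply: lerD; exact: ler_wpM2l.
Qed.

Lemma coll_lem {R : realType} (al be p1 p2 q1 q2 r1 r2 : R) :
  al * (q1 - p1) + be * (q2 - p2) = 0 ->
  (q1 - p1) * (r2 - p2) - (q2 - p2) * (r1 - p1) = 0 ->
  (p1, p2) <> (q1, q2) ->
  al * (r1 - p1) + be * (r2 - p2) = 0.
Proof.
move=> h1 h2 hne.
have e1 : (al * (r1 - p1) + be * (r2 - p2)) * (q1 - p1) =
   (al * (q1 - p1) + be * (q2 - p2)) * (r1 - p1) + be * ((q1 - p1) * (r2 - p2) - (q2 - p2) * (r1 - p1)) by ring.
have e2 : (al * (r1 - p1) + be * (r2 - p2)) * (q2 - p2) =
   (al * (q1 - p1) + be * (q2 - p2)) * (r2 - p2) - al * ((q1 - p1) * (r2 - p2) - (q2 - p2) * (r1 - p1)) by ring.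
rewrite h1 h2 !mul0r mulr0 addr0 in e1.
rewrite h1 h2 !mul0r mulr0 subr0 in e2.
move/eqP: e1; rewrite mulf_eq0 => /orP[/eqP//|/eqP e1].
move/eqP: e2; rewrite mulf_eq0 => /orP[/eqP//|/eqP e2].
exfalso; apply: hne; by rewrite (subr0_eq e1) (subr0_eq e2).
Qed.

Lemma wid_gen {R : realType} (a0 b0 a1 b1 a2 b2 u v : R) : a0*b1 - b0*a1 != 0 -> a1*b2 - b1*a2 != 0 ->
  (-( - a2 * (b0 - b1) + b2 * (a0 - a1) - (a0*b1 - b0*a1)) / ((a0*b1-b0*a1)*(a1*b2-b1*a2))) * (a1*u+b1*v)
  = ((a1*u+b1*v) - (a2*u+b2*v))/(a1*b2-b1*a2) - ((a0*u+b0*v) - (a1*u+b1*v))/(a0*b1-b0*a1).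
Proof. move=> h1 h2; field; by rewrite h1 h2. Qed.

Theorem corollary1 (R : realType) (n : nat) (xb yb : R) (a b : 'I_n -> R) :
  (3 <= n)%N ->
  (forall k, a k ^+ 2 + b k ^+ 2 != 0) ->
  (forall i, a i * b (succ i) - b i * a (succ i) > 0) ->
  (forall i k, k != i -> k != succ i ->
     - a k * (b i - b (succ i)) + b k * (a i - a (succ i))
       - (a i * b (succ i) - b i * a (succ i)) < 0) ->
  exists V : 'I_n -> R * R,
    (forall i, line xb yb (a i) (b i) `&` line xb yb (a (succ i)) (b (succ i))
                   = [set V i]) /\
        boundary (Sreg xb yb a b) = \bigcup_(i in [set: 'I_n]) segment (V i) (V (succ i)) /\
        (forall i j, V i = V j -> i = j) /\
        (forall i, ~ collinear (V i) (V (succ i)) (V (succ (succ i)))) /\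
        interior (Sreg xb yb a b) (xb, yb) /\
      convex_plane (Sreg xb yb a b) /\ bounded_plane (Sreg xb yb a b).
Proof.
move=> n3 Hnz HD Hk.
have n2 : (2 <= n)%N by lia.
set D := fun i => a i * b (succ i) - b i * a (succ i).
set f := fun k (p : R * R) => a k * (p.1 - xb) + b k * (p.2 - yb) - 1.
set S := Sreg xb yb a b.
have SE : forall p, S p <-> forall k, f k p <= 0 by [].
set V := fun i => (xb + (b (succ i) - b i) / D i, yb + (a i - a (succ i)) / D i).
have Dne : forall i, D i != 0 by move=> i; rewrite gt_eqF // HD.
have fVD : forall k i, f k (V i) * D i =
   - a k * (b i - b (succ i)) + b k * (a i - a (succ i)) - D i.
  move=> k i; rewrite /f /V /=; field; exact: Dne.
have fV0 : forall i, f i (V i) = 0.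
  move=> i; apply/eqP; rewrite -(mulIr_eq0 _ (mulIf (Dne i))) fVD; apply/eqP.
  rewrite /D; ring.
have fV1 : forall i, f (succ i) (V i) = 0.
  move=> i; apply/eqP; rewrite -(mulIr_eq0 _ (mulIf (Dne i))) fVD; apply/eqP.
  rewrite /D; ring.
have fVlt : forall k i, k != i -> k != succ i -> f k (V i) < 0.
  move=> k i h1 h2; have := Hk i k h1 h2; rewrite -fVD => h.
  have := HD i; rewrite -/(D i) => hD; nra.
have fVle : forall k i, f k (V i) <= 0.
  move=> k i; case: (eqVneq k i) => [->|h1]; first by rewrite fV0.
  case: (eqVneq k (succ i)) => [->|h2]; first by rewrite fV1.
  exact/ltW/fVlt.
have VS : forall i, S (V i) by move=> i k; exact: fVle.
have uniq2 : forall i p q, f i p = f i q -> f (succ i) p = f (succ i) q -> p = q.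
  move=> i [p1 p2] [q1 q2]; rewrite /f /= => e1 e2.
  have hD := Dne i.
  have h1 : D i * (p1 - q1) = 0.
    have -> : D i * (p1 - q1) = b (succ i) * ((a i * (p1 - xb) + b i * (p2 - yb) - 1) - (a i * (q1 - xb) + b i * (q2 - yb) - 1))
      - b i * ((a (succ i) * (p1 - xb) + b (succ i) * (p2 - yb) - 1) - (a (succ i) * (q1 - xb) + b (succ i) * (q2 - yb) - 1)) by rewrite /D; ring.
    by rewrite e1 e2 !subrr !mulr0 subrr.
  have h2 : D i * (p2 - q2) = 0.
    have -> : D i * (p2 - q2) = a i * ((a (succ i) * (p1 - xb) + b (succ i) * (p2 - yb) - 1) - (a (succ i) * (q1 - xb) + b (succ i) * (q2 - yb) - 1))
      - a (succ i) * ((a i * (p1 - xb) + b i * (p2 - yb) - 1) - (a i * (q1 - xb) + b i * (q2 - yb) - 1)) by rewrite /D; ring.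
    by rewrite e1 e2 !subrr !mulr0 subrr.
  move/eqP: h1; rewrite mulf_eq0 (negbTE hD) /= subr_eq0 => /eqP ->.
  by move/eqP: h2; rewrite mulf_eq0 (negbTE hD) /= subr_eq0 => /eqP ->.
have aff : forall k (p q : R * R) t, f k ((1 - t) * p.1 + t * q.1, (1 - t) * p.2 + t * q.2)
   = (1 - t) * f k p + t * f k q.
  by move=> k p q t; rewrite /f /=; ring.
have fdiff : forall k (p q : R * R), f k q = f k p - (a k * (p.1 - q.1) + b k * (p.2 - q.2)).
  by move=> k p q; rewrite /f; ring.
have closedS : closure S `<=` S.
  move=> p hp k; rewrite leNgt; apply/negP => hk.
  set r := f k p / (1 + `|a k| + `|b k|).
  have hc : 0 < 1 + `|a k| + `|b k| by rewrite -addrA ltr_pwDl // addr_ge0.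
  have r0 : 0 < r by rewrite divr_gt0.
  have hr : (`|a k| + `|b k|) * r < f k p.
    have -> : f k p = (1 + `|a k| + `|b k|) * r by rewrite /r mulrC divfK // gt_eqF.
    rewrite ltr_pM2r // -addrA ltrDr //.
  have [q [Sq bq]] := hp (ball p r) (nbhsx_ballx p r r0).
  move: bq => [/= b1 b2].
  have b1' : `|p.1 - q.1| < r := b1.
  have b2' : `|p.2 - q.2| < r := b2.
  have hab := abs_lin (a k) (b k) _ _ _ b1' b2'.
  have hq : f k q <= 0 := Sq k.
  rewrite (fdiff k p q) in hq.
  have := ler_norm (a k * (p.1 - q.1) + b k * (p.2 - q.2)); lra.
have linball : forall k (p : R * R), f k p < 0 -> nbhs p [set q | f k q < 0].
  move=> k p hk; apply/nbhs_ballP.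
  set r := - f k p / (1 + `|a k| + `|b k|).
  have hc : 0 < 1 + `|a k| + `|b k| by rewrite -addrA ltr_pwDl // addr_ge0.
  have r0 : 0 < r by rewrite divr_gt0 // oppr_gt0.
  have hr : (`|a k| + `|b k|) * r < - f k p.
    have -> : - f k p = (1 + `|a k| + `|b k|) * r by rewrite /r mulrC divfK // gt_eqF.
    rewrite ltr_pM2r // -addrA ltrDr //.
  exists r => // q [/= b1 b2] /=.
  have b1' : `|p.1 - q.1| < r := b1.
  have b2' : `|p.2 - q.2| < r := b2.
  have hab := abs_lin (a k) (b k) _ _ _ b1' b2'.
  rewrite (fdiff k p q).
  have := ler_norm (- (a k * (p.1 - q.1) + b k * (p.2 - q.2))); rewrite normrN; lra.
have intlt : forall p, (forall k, f k p < 0) -> nbhs p S.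
  move=> p hp.
  have := @filter_forall _ _ (fun k => [set q | f k q < 0]) (nbhs p) (nbhs_filter p) (fun k => linball k p (hp k)).
  move=> h; apply: (filterS _ h) => q /= hq k; exact/ltW/hq.
have inteq : forall p k, f k p = 0 -> ~ nbhs p S.
  move=> p k hk /nbhs_ballP [r r0' hr].
  have r0 : 0 < r := r0'.
  set c := 1 + `|a k| + `|b k|.
  have hc : 0 < c by rewrite /c -addrA ltr_pwDl // addr_ge0.
  set e := r / (2 * c).
  have e0 : 0 < e by rewrite divr_gt0 // mulr_gt0.
  have ec : 2 * (e * c) = r by rewrite /e; field; rewrite gt_eqF.
  have ea : e * `|a k| < r.
    have : e * `|a k| <= e * c.
      rewrite ler_pM2l // /c; have := normr_ge0 (a k); have := normr_ge0 (b k); lra.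
    lra.
  have eb : e * `|b k| < r.
    have : e * `|b k| <= e * c.
      rewrite ler_pM2l // /c; have := normr_ge0 (a k); have := normr_ge0 (b k); lra.
    lra.
  have hq := hr (p.1 + e * a k, p.2 + e * b k).
  have : S (p.1 + e * a k, p.2 + e * b k).
    apply: hq; split => /=.
    - by rewrite /ball /= opprD addrA subrr sub0r normrN normrM gtr0_norm.
    - by rewrite /ball /= opprD addrA subrr sub0r normrN normrM gtr0_norm.
  move=> /(_ k); rewrite -/(f k _).
  have -> : f k (p.1 + e * a k, p.2 + e * b k) = f k p + e * (a k ^+ 2 + b k ^+ 2) by rewrite /f /=; ring.
  rewrite hk add0r.
  have hs : 0 < a k ^+ 2 + b k ^+ 2 by rewrite lt0r Hnz /= addr_ge0 // sqr_ge0.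
  by rewrite leNgt mulr_gt0.
have convS : forall p q t, S p -> S q -> 0 <= t <= 1 ->
    S ((1 - t) * p.1 + t * q.1, (1 - t) * p.2 + t * q.2).
  move=> p q t hp hq /andP[t0 t1] k.
  change (f k ((1 - t) * p.1 + t * q.1, (1 - t) * p.2 + t * q.2) <= 0).
  rewrite aff.
  have hpk : f k p <= 0 := hp k.
  have hqk : f k q <= 0 := hq k.
  nra.
have Vinj : forall i j, V i = V j -> i = j.
  move=> i j hij; apply/eqP; apply: contraT => nij.
  case: (eqVneq j (succ i)) => hj.
  - have h1 : succ j != i by rewrite hj succ2_neq.
    have h2 : succ j != succ i by rewrite -hj succ_neq.
    by have := fVlt _ _ h1 h2; rewrite hij fV1 ltxx.
  - have h1 : j != i by rewrite eq_sym.
    by have := fVlt j i h1 hj; rewrite hij fV0 ltxx.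
exists V; split.
  move=> i; apply/seteqP; split => p /=.
  - move=> [h1 h2]; apply: (uniq2 i); first by rewrite fV0; exact: h1.
    by rewrite fV1; exact: h2.
  - by move=> ->; split; [exact: fV0 i | exact: fV1 i].
split.
  apply/seteqP; split => p.
  - move=> [hc hi].
    have Sp : S p := closedS p hc.
    have [[k hk]|nk] := pselect (exists k, f k p = 0); last first.
      exfalso; apply: hi; apply: intlt => k; rewrite lt_neqAle.
      have -> : f k p <= 0 := Sp k.
      by rewrite andbT; apply/eqP => h; apply: nk; exists k.
    set i := ord_pred k.
    have ik : succ i = k by rewrite /succ /i ord_predK.
    set j := succ k.
    have ni : i != k by rewrite -ik eq_sym succ_neq.
    have nij : i != j by rewrite /j -ik eq_sym succ2_neq.
    have kj : k != j by rewrite /j eq_sym succ_neq.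
    have c1 : f i (V k) < 0 by apply: fVlt => //; rewrite -/j.
    have c2 : f j (V i) < 0 by apply: fVlt; rewrite ?ik eq_sym.
    set t := f i p / f i (V k).
    have fki : f k (V i) = 0 by rewrite -ik fV1.
    have ep : p = ((1 - t) * (V i).1 + t * (V k).1, (1 - t) * (V i).2 + t * (V k).2).
      apply: (uniq2 i).
      - by rewrite aff fV0 mulr0 add0r /t divfK // lt_eqF.
      - by rewrite ik aff hk fki fV0 !mulr0 addr0.
    exists i => //; rewrite ik; exists t => //.
    apply/andP; split.
    - rewrite /t; apply: mulr_le0; first exact: (Sp i).
      by rewrite invr_le0 ltW.
    - have : f j p <= 0 := Sp j.
      rewrite {1}ep aff (fV1 k) mulr0 addr0 => h.
      nra.
  - move=> [i _ [t ht ->]]; split.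
    + by apply: subset_closure; apply: convS.
    + move=> hi; apply: (inteq _ (succ i) _ hi).
      by rewrite aff fV1 fV0 !mulr0 addr0.
split; first exact: Vinj.
split.
  move=> i hc.
  set m := succ i.
  have hne : V i <> V m.
    by move=> /Vinj /eqP; rewrite eq_sym (negbTE (@succ_neq _ i n2)).
  have hyp1 : a m * ((V m).1 - (V i).1) + b m * ((V m).2 - (V i).2) = 0.
    have -> : a m * ((V m).1 - (V i).1) + b m * ((V m).2 - (V i).2) = f m (V m) - f m (V i) by rewrite /f; ring.
    by rewrite fV0 fV1 subrr.
  have hyp3 : ((V i).1, (V i).2) <> ((V m).1, (V m).2) by rewrite -!surjective_pairing.
  have := coll_lem _ _ _ _ _ _ _ _ hyp1 hc hyp3 => h.
  have : f m (V (succ m)) < 0.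
    by apply: fVlt; rewrite eq_sym ?succ_neq ?succ2_neq.
  have -> : f m (V (succ m)) = f m (V i) + (a m * ((V (succ m)).1 - (V i).1) + b m * ((V (succ m)).2 - (V i).2)) by rewrite /f; ring.
  by rewrite h fV1 addr0 ltxx.
split.
  by apply: intlt => k; rewrite /f /= !subrr !mulr0 addr0 sub0r oppr_lt0.
split.
  by move=> p q hp hq r [t ht ->]; apply: convS.
pose E := fun j => - a (succ (succ j)) * (b j - b (succ j)) + b (succ (succ j)) * (a j - a (succ j)) - D j.
pose w := fun j => - E j / (D j * D (succ j)).
have Elt : forall j, E j < 0.
  move=> j; apply: Hk; first exact: succ2_neq.
  exact: succ_neq.
have w0 : forall j, 0 < w j.
  by move=> j; rewrite /w divr_gt0 ?oppr_gt0 ?mulr_gt0 ?Elt ?HD.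
pose s := fun k (p : R * R) => a k * (p.1 - xb) + b k * (p.2 - yb).
have wid : forall j p, w j * s (succ j) p =
   (s (succ j) p - s (succ (succ j)) p) / D (succ j) - (s j p - s (succ j) p) / D j.
  move=> j p; exact: wid_gen (Dne j) (Dne (succ j)).
have sum0 : forall p, \sum_j w j * s (succ j) p = 0.
  move=> p; pose G := fun j => (s j p - s (succ j) p) / D j.
  transitivity (\sum_j (G (succ j) - G j)).
    by apply: eq_bigr => j _; rewrite wid.
  rewrite sumrB.
  have -> : \sum_j G (succ j) = \sum_j G j.
    by symmetry; exact: (reindex_inj (@ordS_inj n)).
  by rewrite subrr.
set W := \sum_j w j.
have bnd : forall p, S p -> forall j, w j * (1 - s (succ j) p) <= W.
  move=> p hp j.
  have e : \sum_i w i * (1 - s (succ i) p) = W.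
    have -> : \sum_i w i * (1 - s (succ i) p) = \sum_i w i - \sum_i w i * s (succ i) p.
      by rewrite -sumrB; apply: eq_bigr => i _; ring.
    by rewrite sum0 subr0.
  rewrite -e (bigD1 j) //= lerDl; apply: sumr_ge0 => i _; apply: mulr_ge0; first exact: ltW.
  have : f (succ i) p <= 0 := hp _.
  rewrite /f /s /=; lra.
have n0 : (0 < n)%N by lia.
pose j0 : 'I_n := Ordinal n0.
set k0 := succ j0.
set k1 := succ k0.
have W0 : 0 <= W by apply: sumr_ge0 => j _; exact: ltW.
set B0 := W / w j0.
set B1 := W / w k0.
have B00 : 0 <= B0 by rewrite divr_ge0 // ltW.
have B10 : 0 <= B1 by rewrite divr_ge0 // ltW.
set T := 1 + B0 + B1.
have T0 : 0 <= T by rewrite /T !addr_ge0.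
set Mu := (`|b k1| + `|b k0|) * T / D k0.
set Mv := (`|a k0| + `|a k1|) * T / D k0.
have Mu0 : 0 <= Mu by apply: divr_ge0; [apply: mulr_ge0 => //; exact: addr_ge0 | exact: ltW (HD k0)].
have Mv0 : 0 <= Mv by apply: divr_ge0; [apply: mulr_ge0 => //; exact: addr_ge0 | exact: ltW (HD k0)].
exists (`|xb| + `|yb| + Mu + Mv) => p hp.
have hsk : forall j, 1 - s (succ j) p <= W / w j.
  move=> j; rewrite ler_pdivlMr // mulrC; exact: bnd.
have hs1 : forall k, s k p <= 1.
  move=> k; have : f k p <= 0 := hp k.
  rewrite /f /s /=; lra.
have hs0 : `|s k0 p| <= T.
  have h1 := hs1 k0; have h2 := hsk j0; rewrite -/k0 -/B0 in h2.
  rewrite ler_norml; apply/andP; split; rewrite /T; lra.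
have hs1' : `|s k1 p| <= T.
  have h1 := hs1 k1; have h2 := hsk k0; rewrite -/k1 -/B1 in h2.
  rewrite ler_norml; apply/andP; split; rewrite /T; lra.
have eu : D k0 * (p.1 - xb) = b k1 * s k0 p - b k0 * s k1 p by rewrite /D /s /k1 /=; ring.
have ev : D k0 * (p.2 - yb) = a k0 * s k1 p - a k1 * s k0 p by rewrite /D /s /k1 /=; ring.
have hu : `|p.1 - xb| <= Mu.
  have h := abs_lin2 (b k1) (b k0) _ _ T hs0 hs1'.
  rewrite -eu normrM gtr0_norm ?HD // in h.
  by rewrite /Mu ler_pdivlMr ?HD // mulrC.
have hv : `|p.2 - yb| <= Mv.
  have h := abs_lin2 (a k0) (a k1) _ _ T hs1' hs0.
  rewrite -ev normrM gtr0_norm ?HD // in h.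
  by rewrite /Mv ler_pdivlMr ?HD // mulrC.
have e1 : `|p.1| <= `|xb| + `|p.1 - xb| by have := ler_normD xb (p.1 - xb); rewrite addrC subrK.
have e2 : `|p.2| <= `|yb| + `|p.2 - yb| by have := ler_normD yb (p.2 - yb); rewrite addrC subrK.
have := normr_ge0 xb; have := normr_ge0 yb.
split; lra.
Qed.
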